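(* Let $\mathcal{N}$ be a cactus network, let $t$ be a sink of $\mathcal{N}$ with parents $p_l$ and $p_r$, and let $s$ be the lowest common ancestor of $\{p_l,p_r\}$. Let $P_l$ and $P_r$ be directed paths from $s$ to $p_l$ and from $s$ to $p_r$, respectively. Then (i) $P_l$ and $P_r$ are edge-disjoint; (ii) neither $P_l$ nor $P_r$ contains a sink, except possibly the vertex $s$; (iii) $P_l$ and $P_r$ are the unique directed paths from $s$ to $p_l$ and from $s$ to $p_r$.
   Context: A cactus network is a finite directed acyclic graph $\mathcal{N}$ with a unique vertex of indegree $0$ (the root) such that in its underlying undirected graph $\mathcal{N}^\star$ every edge belongs to at most one simple cycle. $u\succcurlyeq v$ means there is a directed path (possibly of length $0$) from $u$ to $v$; $u\succ v$ means $u\succcurlyeq v$, $u\neq v$. A lowest common ancestor of a set $V$ is a vertex $u$ with $u\succcurlyeq v$ for all $v\in V$ such that no $u'$ with $u\succ u'$ satisfies $u'\succcurlyeq v$ for all $v\in V$; in a cactus network it is unique. A sink is a vertex of indegree $2$ (every vertex of a cactus network has indegree at most $2$). *)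

(* Defs.v *)
From mathcomp Require Import all_boot.
Set Implicit Arguments. Unset Strict Implicit. Unset Printing Implicit Defensive.

Section CactusDefs.
Variables (V : finType) (E : rel V).

Definition indeg (v : V) : nat := #|[pred u | E u v]|.

Definition reach (u v : V) : bool := connect E u v.
Definition sreach (u v : V) : bool := reach u v && (u != v).

Definition dag : Prop := forall x y, E x y -> ~~ connect E y x.

Definition uadj (x y : V) : bool := E x y || E y x.

Definition usimple_cycle (c : seq V) : bool :=
  [&& uniq c, 2 < size c & cycle uadj c].

Definition cycle_has_edge (c : seq V) (x y : V) : bool :=
  ((x \in c) && (next c x == y)) || ((y \in c) && (next c y == x)).

(* every edge of the underlying undirected graph lies on at most one simple
   cycle (cycles being identified with their edge sets) *)
Definition cactus_property : Prop :=
  forall c1 c2 : seq V, usimple_cycle c1 -> usimple_cycle c2 ->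
  forall x y, E x y -> cycle_has_edge c1 x y -> cycle_has_edge c2 x y ->
  forall u w, E u w -> cycle_has_edge c1 u w = cycle_has_edge c2 u w.

Definition unique_root : Prop :=
  exists r : V, indeg r = 0 /\ forall v, indeg v = 0 -> v = r.

Definition cactus_network : Prop := [/\ dag, unique_root & cactus_property].

Definition is_sink (v : V) : bool := indeg v == 2.

Definition is_lca2 (s x y : V) : Prop :=
  reach s x /\ reach s y /\
  forall u, sreach s u -> ~ (reach u x /\ reach u y).

Definition path_edges (s : V) (p : seq V) : seq (V * V) := zip (s :: p) p.

End CactusDefs.

(* Main.v *)
Require Import Defs.
From mathcomp Require Import all_boot.
Set Implicit Arguments. Unset Strict Implicit. Unset Printing Implicit Defensive.

Lemma path_edges_cons (V : finType) (x y : V) p :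
  path_edges x (y :: p) = (x, y) :: path_edges y p.
Proof. by []. Qed.

Lemma path_edges_cat (V : finType) (x : V) p q :
  path_edges x (p ++ q) = path_edges x p ++ path_edges (last x p) q.
Proof. by elim: p x => [|y p IH] x //=; rewrite !path_edges_cons IH. Qed.

Lemma path_edges_E (V : finType) (E : rel V) x p a b :
  path E x p -> (a, b) \in path_edges x p -> E a b.
Proof.
elim: p x => [|y p IH] x //= /andP[Hxy Hp]; rewrite path_edges_cons inE.
by case/orP => [/eqP [-> ->] | /(IH _ Hp)].
Qed.

Lemma path_edges_snd (V : finType) (x : V) p a b :
  (a, b) \in path_edges x p -> b \in p.
Proof.
elim: p x => [|y p IH] x //=; rewrite path_edges_cons !inE.
by case/orP => [/eqP [_ ->] | /IH ->]; rewrite ?eqxx ?orbT.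
Qed.

Lemma last_edge (V : finType) (x y : V) p :
  (last x p, y) \in path_edges x (rcons p y).
Proof. by rewrite -cats1 path_edges_cat mem_cat /= path_edges_cons inE eqxx orbT. Qed.

Lemma memP_split (T : eqType) (u : T) s : u \in s -> exists l r, s = l ++ u :: r.
Proof. by case/splitPr => l r; exists l, r. Qed.

Lemma path_suffix (V : finType) (E : rel V) x p l w r :
  path E x p -> x :: p = l ++ w :: r -> path E w r.
Proof.
case: l => [|y l] /=; first by move=> Hp [e1 e2]; subst.
move=> Hp [_ Hpe]; rewrite Hpe cat_path in Hp.
by case/andP: Hp => _ /= /andP[].
Qed.

Lemma last_suffix (T : Type) (x : T) p l w r :
  x :: p = l ++ w :: r -> last x p = last w r.
Proof.
move=> H; have : last x (x :: p) = last x (l ++ w :: r) by rewrite H.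
by rewrite last_cat.
Qed.

Lemma path_mem_last (V : finType) (E : rel V) x p u :
  path E x p -> u \in x :: p -> connect E u (last x p).
Proof.
move=> Hp /memP_split [l [r H]].
rewrite (last_suffix H); apply: (path_connect (path_suffix Hp H)).
exact: mem_last.
Qed.

Lemma dag_irr (V : finType) (E : rel V) : dag E -> forall x y, E x y -> x != y.
Proof. move=> D x y Hxy; apply/eqP=> e; subst; by have := D _ _ Hxy; rewrite connect0. Qed.

Lemma dag_notin (V : finType) (E : rel V) : dag E -> forall x p, path E x p -> x \notin p.
Proof.
move=> D x [|y p] //= /andP [Hxy Hp]; apply/negP => Hx.
by have := D _ _ Hxy; rewrite (path_connect Hp Hx).
Qed.

Lemma dag_uniq (V : finType) (E : rel V) : dag E -> forall x p, path E x p -> uniq (x :: p).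
Proof.
move=> D x p; elim: p x => [|y p IH] x // Hp.
have Hn := dag_notin D Hp; case/andP: Hp => _ Hp.
by rewrite cons_uniq Hn IH.
Qed.

Lemma root_reach (V : finType) (E : rel V) (r : V) : dag E ->
  (forall v, indeg E v = 0 -> v = r) -> forall v, connect E r v.
Proof.
move=> D Hr v; have [m Hm] := ubnP #|[pred u | connect E u v]|.
elim: m v Hm => // m IH v Hm.
case Hv: (indeg E v) => [|k]; first by rewrite (Hr _ Hv) connect0.
have : 0 < indeg E v by rewrite Hv.
case/card_gt0P => u; rewrite inE => Huv.
apply: (connect_trans (IH u _)); last exact: connect1.
rewrite -ltnS; apply: leq_trans Hm; rewrite ltnS; apply: proper_card.
apply/properP; split.
  apply/subsetP => w; rewrite !inE => Hw; apply: (connect_trans Hw); exact: connect1.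
by exists v; rewrite !inE ?connect0 //; apply: D.
Qed.

Lemma mem_zip_uniq (T1 T2 : eqType) (L : seq T1) (R : seq T2) a b y0 :
  size L = size R -> uniq L ->
  ((a, b) \in zip L R) = (a \in L) && (nth y0 R (index a L) == b).
Proof.
elim: L R => [|l L IH] [|r R] //= [Hs] /andP [HlL HuL].
rewrite !in_cons IH // xpair_eqE.
case: (eqVneq a l) => [->|Hal] /=.
  by rewrite (negbTE HlL) /= orbF eq_sym.
by [].
Qed.

Lemma zip_rcons_l (T1 T2 : Type) (s : seq T1) (t : seq T2) x :
  size s = size t -> zip (rcons s x) t = zip s t.
Proof. by elim: s t => [|y s IH] [|z t] //= [H]; rewrite IH. Qed.

Lemma nth_rcons_same (T : Type) (x0 : T) w i : nth x0 w i = nth x0 (rcons w x0) i.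
Proof.
rewrite nth_rcons; case: ltnP => // H.
by rewrite nth_default //; case: eqP.
Qed.

Lemma next_edge (V : finType) (x0 : V) w a b : uniq (x0 :: w) ->
  (a \in x0 :: w) && (next (x0 :: w) a == b) = ((a, b) \in path_edges x0 (rcons w x0)).
Proof.
move=> U; rewrite /path_edges -rcons_cons zip_rcons_l ?size_rcons //.
rewrite (mem_zip_uniq _ _ x0) ?size_rcons //.
rewrite next_nth; case Ha: (a \in x0 :: w) => //=.
by case: ifP => _; rewrite nth_rcons_same.
Qed.

Lemma che_edge (V : finType) (E : rel V) (x0 : V) w a b : uniq (x0 :: w) ->
  cycle_has_edge (x0 :: w) a b =
  ((a, b) \in path_edges x0 (rcons w x0)) || ((b, a) \in path_edges x0 (rcons w x0)).
Proof. by move=> U; rewrite /cycle_has_edge !next_edge. Qed.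

Lemma theta (V : finType) (E : rel V) : dag E -> forall x A y B,
  path E x A -> path E x B -> E (last x A) y -> E (last x B) y -> last x A != last x B ->
  uniq (x :: A ++ y :: B) ->
  [/\ usimple_cycle E (x :: A ++ y :: rev B),
      forall p q, (p, q) \in path_edges x (rcons A y) -> cycle_has_edge (x :: A ++ y :: rev B) p q
    & {subset x :: A ++ y :: rev B <= x :: A ++ y :: B}].
Proof.
move=> D x A y B HA HB HAy HBy Hne U.
have Hsub : {subset x :: A ++ y :: rev B <= x :: A ++ y :: B}.
  by move=> u; rewrite !(inE, mem_cat, mem_rev).
have Uc : uniq (x :: A ++ y :: rev B).
  rewrite (perm_uniq (_ : perm_eq _ (x :: A ++ y :: B))) //.
  by rewrite perm_cons perm_cat2l perm_cons perm_rev.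
split => //.
- rewrite /usimple_cycle Uc /=; apply/andP; split.
    have H3 : uniq [:: last x A; y; last x B].
      rewrite /= !inE negb_or Hne (dag_irr D HAy) eq_sym (dag_irr D HBy) //.
    suff Hs : {subset [:: last x A; y; last x B] <= x :: A ++ y :: rev B}.
      by have := uniq_leq_size H3 Hs.
    move=> u; rewrite !inE.
    case/orP => [/eqP -> | /orP [/eqP -> | /eqP ->]].
    + have := mem_last x A; rewrite inE mem_cat => /orP[->|->] //; by rewrite orbT.
    + by rewrite mem_cat inE eqxx !orbT.
    + have := mem_last x B; rewrite inE mem_cat inE mem_rev => /orP[->|->] //; by rewrite !orbT.
  rewrite rcons_cat rcons_cons -rev_cons cat_path.
  apply/andP; split.
    by apply: sub_path HA => a b Hab; rewrite /uadj Hab.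
  rewrite /=.
  have -> : path (uadj E) y (rev (x :: B)) = path (fun z => (uadj E)^~ z) x (rcons B y).
    by rewrite -(rev_path (uadj E) x (rcons B y)) last_rcons belast_rcons.
  apply/andP; split; first by rewrite /uadj HAy.
  have : path E x (rcons B y) by rewrite rcons_path HB HBy.
  by apply: sub_path => a b Hab; rewrite /uadj Hab orbT.
- move=> p q H; rewrite che_edge //; apply/orP; left.
  by rewrite rcons_cat rcons_cons -cat_rcons path_edges_cat mem_cat H.
Qed.

Lemma split_last (T : eqType) (P : pred T) z Y : P z ->
  exists Y1 w Y2, z :: Y = Y1 ++ w :: Y2 /\ P w /\ all (predC P) Y2.
Proof.
move=> Pz; elim/last_ind: Y => [|Y y [Y1 [w [Y2 [HY [Pw HA]]]]]].
  by exists [::], z, [::].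
case Py: (P y).
  by exists (z :: Y), y, [::]; rewrite -rcons_cons cats1.
exists Y1, w, (rcons Y2 y); split => //.
  by rewrite -rcons_cons HY rcons_cat rcons_cons.
by rewrite all_rcons /= Py HA.
Qed.

Lemma split_first (T : eqType) (P : pred T) s : has P s ->
  exists s1 w s2, s = s1 ++ w :: s2 /\ P w /\ all (predC P) s1.
Proof.
elim: s => [|y s IH] //= /orP [Py | Hs].
  by exists [::], y, s.
case Py: (P y).
  by exists [::], y, s.
have [s1 [w [s2 [-> [Pw Ha]]]]] := IH Hs.
by exists (y :: s1), w, s2; rewrite /= Py Ha.
Qed.

Lemma core (V : finType) (E : rel V) : dag E -> forall z X Y v,
  path E z (rcons X v) -> path E z (rcons Y v) -> last z X != last z Y ->
  exists c, [/\ usimple_cycle E c, cycle_has_edge c (last z X) v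
              & forall u, u \in c -> connect E u v].
Proof.
move=> D z X Y v HX HY Hne.
have [Y1 [w [Y2 [HYs [Hw HA]]]]] := @split_last _ (fun u => u \in z :: X) z Y (mem_head z X).
have [X1 [X2 HXs]] := memP_split Hw.
move: (HX) (HY); rewrite !rcons_path => /andP [HX0 HXv] /andP [HY0 HYv].
have PX2 := path_suffix HX0 HXs.
have PY2 := path_suffix HY0 HYs.
have LX := last_suffix HXs.
have LY := last_suffix HYs.
have UX : uniq (w :: rcons X2 v).
  have := dag_uniq D HX; rewrite -rcons_cons HXs rcons_cat cat_uniq.
  by case/and3P.
have UY : uniq (w :: rcons Y2 v).
  have := dag_uniq D HY; rewrite -rcons_cons HYs rcons_cat cat_uniq.
  by case/and3P.
have subX : {subset w :: X2 <= z :: X}.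
  by move=> u Hu; rewrite HXs mem_cat Hu orbT.
have U : uniq (w :: X2 ++ v :: Y2).
  rewrite -cat_cons cat_uniq; apply/and3P; split.
  - by move: UX; rewrite -rcons_cons rcons_uniq => /andP[].
  - rewrite /= negb_or; apply/andP; split.
      by move: UX; rewrite -rcons_cons rcons_uniq => /andP[].
    apply/hasPn => u Hu; apply/negP => /subX Hu'.
    by have := allP HA u Hu; rewrite /= Hu'.
  - rewrite /= -rcons_uniq.
    by move: UY; rewrite /= => /andP[].
have HXv' : E (last w X2) v by rewrite -LX.
have HYv' : E (last w Y2) v by rewrite -LY.
have Hne' : last w X2 != last w Y2 by rewrite -LX -LY.
have [Hc Hedge Hsub] := theta D PX2 PY2 HXv' HYv' Hne' U.
exists (w :: X2 ++ v :: rev Y2); split => //.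
  by rewrite LX; apply: Hedge; apply: last_edge.
move=> u /Hsub; rewrite -cat_cons mem_cat inE => /orP [/subX Hu | /orP [/eqP -> | Hu]].
- have -> : v = last z (rcons X v) by rewrite last_rcons.
  by apply: path_mem_last HX _; rewrite inE mem_rcons inE; move: Hu; rewrite inE => /orP[->|->]; rewrite ?orbT.
- exact: connect0.
- have -> : v = last z (rcons Y v) by rewrite last_rcons.
  apply: path_mem_last HY _; rewrite -rcons_cons mem_rcons in_cons HYs mem_cat.
  by apply/orP; right; apply/orP; right; rewrite in_cons; apply/orP; right.
Qed.

Lemma path_last_self (V : finType) (E : rel V) : dag E -> forall x Q,
  path E x Q -> last x Q = x -> Q = [::].
Proof.
move=> D x [|q Q] // HQ Hl; exfalso.
have := dag_notin D HQ; rewrite -[X in X \in _]Hl /=.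
by rewrite mem_last.
Qed.

Lemma diverge (V : finType) (E : rel V) : dag E -> forall x P Q,
  path E x P -> path E x Q -> last x P = last x Q -> P != Q ->
  exists X Y v, [/\ path E x (rcons X v), path E x (rcons Y v), last x X != last x Y,
     (last x X, v) \in path_edges x P & v \in P].
Proof.
move=> D x P; elim: P x => [|p P IH] x Q HP HQ Hl Hne.
  by rewrite (path_last_self D HQ (esym Hl)) in Hne.
case: Q HQ Hl Hne => [|q Q] HQ Hl Hne.
  by have := path_last_self D HP Hl.
have Hxp := dag_notin D HP; have Hxq := dag_notin D HQ.
move: (HP) (HQ) => /= /andP [Exp HP'] /andP [Exq HQ'].
case: (eqVneq p q) => [Epq|Hpq].
  subst q.
  have Hne' : P != Q by move: Hne; rewrite eqseq_cons eqxx.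
  have [X [Y [v [H1 H2 H3 H4 H5]]]] := IH p Q HP' HQ' Hl Hne'.
  exists (p :: X), (p :: Y), v; split => //=.
  - by rewrite Exp.
  - by rewrite Exp.
  - by rewrite path_edges_cons in_cons H4 orbT.
  - by rewrite in_cons H5 orbT.
have Hh : has (fun u => u \in p :: P) (q :: Q).
  apply/hasP; exists (last q Q); first exact: mem_last.
  by rewrite -[last q Q]/(last x (q :: Q)) -Hl /= mem_last.
have [Q1 [w [Q2 [HQs [Hw HA]]]]] := split_first Hh.
have [L1 [L2 HPs]] := memP_split Hw.
exists L1, Q1, w; split.
- by move: HP; rewrite HPs cat_path rcons_path => /andP [-> /= /andP[->]].
- by move: HQ; rewrite HQs cat_path rcons_path => /andP [-> /= /andP[->]].
- case: L1 HPs => [|l1 L1] HPs; case: Q1 HQs HA => [|q1 Q1] HQs HA /=.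
  + by move: HPs HQs Hpq => [-> _] [-> _]; rewrite eqxx.
  + apply/eqP => Hx; move: Hxq; rewrite HQs mem_cat Hx.
    by rewrite mem_last.
  + apply/eqP => Hx; move: Hxp; rewrite HPs mem_cat -Hx.
    by rewrite mem_last.
  + apply/eqP => Hx.
    have := allP HA _ (mem_last q1 Q1); rewrite /= -Hx HPs mem_cat.
    by rewrite mem_last.
- by rewrite HPs path_edges_cat mem_cat path_edges_cons in_cons eqxx orbT.
- exact: Hw.
Qed.

Lemma left_side (V : finType) (E : rel V) (t pl pr s : V) (Pl Pr : seq V) :
  cactus_network E -> E pl t -> E pr t -> pl != pr -> is_lca2 E s pl pr ->
  path E s Pl -> last s Pl = pl -> path E s Pr -> last s Pr = pr ->
  (forall v, v \in Pl -> ~~ is_sink E v) /\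
  (forall Q, path E s Q -> last s Q = pl -> Q = Pl).
Proof.
move=> [D [r [Hr0 Hr]] C] Hlt Hrt Hne [Hspl [Hspr Hlca]] HPl Hl HPr Hr'.
have lcaF : forall u, connect E s u -> u != s -> connect E u pl -> connect E u pr -> False.
  move=> u H1 H2 H3 H4; apply: (Hlca u); last by split.
  by rewrite /sreach /reach H1 eq_sym H2.
have toPl : forall u, u \in s :: Pl -> connect E u pl.
  by move=> u Hu; rewrite -Hl; apply: path_mem_last.
have toPr : forall u, u \in s :: Pr -> connect E u pr.
  by move=> u Hu; rewrite -Hr'; apply: path_mem_last.
have sPl := dag_notin D HPl; have sPr := dag_notin D HPr.
have U : uniq (s :: Pl ++ t :: Pr).
  rewrite -cat_cons cat_uniq; apply/and3P; split.
  - by have := dag_uniq D HPl.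
  - rewrite /= negb_or; apply/andP; split.
      apply/negP => /toPl Ht; by have := D _ _ Hlt; rewrite Ht.
    apply/hasPn => u Hu; apply/negP; rewrite in_cons => /orP [/eqP Hus | HuPl].
      by move: sPr; rewrite -Hus Hu.
    have Hus : u != s by apply/eqP => e; move: sPl; rewrite -e HuPl.
    apply: (lcaF u) => //.
    + by apply: (path_connect HPl); rewrite in_cons HuPl orbT.
    + by apply: toPl; rewrite in_cons HuPl orbT.
    + by apply: toPr; rewrite in_cons Hu orbT.
  - rewrite cons_uniq; apply/andP; split.
      apply/negP => Ht; have : connect E t pr by apply: toPr; rewrite in_cons Ht orbT.
      by have := D _ _ Hrt => /negbTE ->.
    by have := dag_uniq D HPr; rewrite cons_uniq => /andP[].
have HEl : E (last s Pl) t by rewrite Hl.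
have HEr : E (last s Pr) t by rewrite Hr'.
have Hne' : last s Pl != last s Pr by rewrite Hl Hr'.
have [Hc1 Hed1 _] := theta D HPl HPr HEl HEr Hne' U.
set c1 := s :: Pl ++ t :: rev Pr in Hc1 Hed1.
have KC : forall c a v, usimple_cycle E c -> cycle_has_edge c a v ->
    (a, v) \in path_edges s Pl -> (forall u, u \in c -> connect E u pl) -> False.
  move=> c a v Hc Hcav Hav Hcu.
  have Eav := path_edges_E HPl Hav.
  have Hc1av : cycle_has_edge c1 a v.
    by apply: Hed1; rewrite -cats1 path_edges_cat mem_cat Hav.
  have := C c1 c Hc1 Hc a v Eav Hc1av Hcav pl t Hlt.
  have -> : cycle_has_edge c1 pl t by apply: Hed1; rewrite -Hl last_edge.
  have tc : t \notin c.
    apply/negP => /Hcu Ht; by have := D _ _ Hlt; rewrite Ht.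
  rewrite /cycle_has_edge (negbTE tc) /= orbF.
  case Hpl: (pl \in c) => //= /esym /eqP Hn.
  by have := mem_next c pl; rewrite Hn Hpl (negbTE tc).
split.
- move=> v Hv; apply/negP => /eqP Hv2.
  have [l [r' Hsp]] := memP_split Hv.
  set a := last s l.
  have Hav : (a, v) \in path_edges s Pl.
    by rewrite Hsp path_edges_cat mem_cat path_edges_cons in_cons eqxx orbT.
  have Eav := path_edges_E HPl Hav.
  case: (boolP [exists b, E b v && (b != a)]) => [/existsP [b /andP [Ebv Hba]] | Hno]; last first.
    suff : #|[pred u | E u v]| <= 1 by rewrite -/(indeg E v) Hv2.
    rewrite -(card1 a); apply: subset_leq_card; apply/subsetP => u; rewrite !inE => Huv.
    by apply/negPn/negP => Hua; move/existsP: Hno; apply; exists u; rewrite Huv.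
  have rr := root_reach D Hr.
  have [ps Hps Hlps] := connectP (rr s).
  have [pb Hpb Hlpb] := connectP (rr b).
  have HX : path E r (rcons (ps ++ l) v).
    rewrite rcons_cat cat_path Hps -Hlps.
    by move: HPl; rewrite Hsp cat_path => /andP [Hl1 /= /andP [Hav' _]]; rewrite rcons_path Hl1.
  have HY : path E r (rcons pb v) by rewrite rcons_path Hpb -Hlpb.
  have Hne2 : last r (ps ++ l) != last r pb by rewrite last_cat -Hlps -Hlpb eq_sym.
  have [c [Hc Hcav Hcu]] := core D HX HY Hne2.
  apply: (KC c a v Hc) => //.
    by move: Hcav; rewrite last_cat -Hlps.
  by move=> u /Hcu Huv; apply: (connect_trans Huv); apply: toPl; rewrite in_cons Hv orbT.
- move=> Q HQ HlQ; case: (eqVneq Q Pl) => // HQP; exfalso.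
  have HPQ : Pl != Q by rewrite eq_sym.
  have [X [Y [v [H1 H2 H3 H4 H5]]]] := diverge D HPl HQ (etrans Hl (esym HlQ)) HPQ.
  have [c [Hc Hcav Hcu]] := core D H1 H2 H3.
  apply: (KC c _ v Hc Hcav H4).
  by move=> u /Hcu Huv; apply: (connect_trans Huv); apply: toPl; rewrite in_cons H5 orbT.
Qed.

Theorem lemma5 (V : finType) (E : rel V) (t pl pr s : V) (Pl Pr : seq V) :
  cactus_network E ->
  is_sink E t -> E pl t -> E pr t -> pl != pr ->
  is_lca2 E s pl pr ->
  path E s Pl -> last s Pl = pl ->
  path E s Pr -> last s Pr = pr ->
  [/\ (* (i) edge-disjoint *)
      (forall e, e \in path_edges s Pl -> e \notin path_edges s Pr),
      (* (ii) no sink on the paths except possibly s *)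
      (forall v, v \in Pl -> ~~ is_sink E v) /\
      (forall v, v \in Pr -> ~~ is_sink E v) &
      (* (iii) uniqueness *)
      (forall Q, path E s Q -> last s Q = pl -> Q = Pl) /\
      (forall Q, path E s Q -> last s Q = pr -> Q = Pr)].
Proof.
move=> Hc _ Hlt Hrt Hne Hlca HPl Hl HPr Hr.
have [Ll Ql] := left_side Hc Hlt Hrt Hne Hlca HPl Hl HPr Hr.
have Hlca' : is_lca2 E s pr pl.
  case: Hlca => [H1 [H2 H3]]; split => //; split => // u Hu [A B]; exact: (H3 u Hu).
have Hne' : pr != pl by rewrite eq_sym.
have [Lr Qr] := left_side Hc Hrt Hlt Hne' Hlca' HPr Hr HPl Hl.
split => //.
case: Hc => D _ _.
move=> [a b] H1; apply/negP => H2.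
have Hb1 := path_edges_snd H1; have Hb2 := path_edges_snd H2.
case: Hlca => _ [_ H3].
have Hs : sreach E s b.
  rewrite /sreach /reach (path_connect HPl) ?in_cons ?Hb1 ?orbT //=.
  by apply/eqP => e; move: (dag_notin D HPl); rewrite e Hb1.
apply: (H3 b Hs); split.
- by rewrite /reach -Hl; apply: path_mem_last HPl _; rewrite in_cons Hb1 orbT.
- by rewrite /reach -Hr; apply: path_mem_last HPr _; rewrite in_cons Hb2 orbT.
Qed.
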